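(* Let $S=\{v_1,\ldots,v_n\}\subset\mathbb Z^n$ be an orthogonal subset with $|V_\alpha|\ge2$ for all $\alpha$. Let $i\in\mathcal P_2$ with $E_i=\{s,t\}$ and $|\langle v_s,e_i\rangle|=|\langle v_t,e_i\rangle|=1$. Then, up to a change of basis of $\mathbb Z^n$ and negation of $v_s$ or $v_t$, $v_s=e_i+e_j$ and $v_t=e_i-e_j$ for some $j\in\mathcal P_2$.
   Context: $\mathbb Z^n$ carries the standard dot product with standard basis $e_1,\ldots,e_n$. $S$ is orthogonal if $\langle v_\alpha,v_\alpha\rangle\ge1$ for all $\alpha$ and $\langle v_\alpha,v_\beta\rangle=0$ for $\alpha\ne\beta$. $V_\alpha=\{j:\langle v_\alpha,e_j\rangle\ne0\}$, $E_j=\{\alpha:\langle v_\alpha,e_j\rangle\ne0\}$, $\mathcal P_2=\{j:|E_j|=2\}$. A change of basis of $\mathbb Z^n$ means replacing the standard basis by another orthonormal basis (a signed permutation of coordinates). *)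

(* Defs.v *)
From mathcomp Require Import all_boot all_order all_algebra all_fingroup.
Set Implicit Arguments. Unset Strict Implicit. Unset Printing Implicit Defensive.
Import Order.TTheory GRing.Theory Num.Theory.
Local Open Scope ring_scope.

(* Vectors of Z^n are functions 'I_n -> int (x k = <x, e_k>).
   A family S = {v_1,...,v_n} is v : 'I_n -> ('I_n -> int), v a k = <v_a, e_k>. *)

Definition dot n (x y : 'I_n -> int) : int := \sum_(k < n) x k * y k.

Definition e n (j : 'I_n) : 'I_n -> int := fun k => (k == j)%:Z.

Definition orthogonal_family n (v : 'I_n -> 'I_n -> int) : Prop :=
  (forall a, 1 <= dot (v a) (v a)) /\
  (forall a b, a != b -> dot (v a) (v b) = 0).

Definition Vset n (v : 'I_n -> 'I_n -> int) (a : 'I_n) : {set 'I_n} :=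
  [set j | v a j != 0].

Definition Eset n (v : 'I_n -> 'I_n -> int) (j : 'I_n) : {set 'I_n} :=
  [set a | v a j != 0].

Definition P2 n (v : 'I_n -> 'I_n -> int) : {set 'I_n} :=
  [set j | #|Eset v j| == 2%N].

(* Change of basis of Z^n to another orthonormal basis = signed permutation
   of coordinates: the new k-th coordinate of x is eps k * x (p k). *)
Definition sign_ok (c : int) : Prop := c = 1 \/ c = -1.

Definition sperm n (p : 'S_n) (eps : 'I_n -> int) (x : 'I_n -> int) : 'I_n -> int :=
  fun k => eps k * x (p k).

(* Main.v *)
Require Import Defs.
From mathcomp Require Import all_boot all_order all_algebra all_fingroup.
From mathcomp Require Import ring lra zify.
Import Order.TTheory GRing.Theory Num.Theory.
Local Open Scope ring_scope.
Lemma key {n} (v : 'I_n -> 'I_n -> int) (hS : orthogonal_family v) (k l : 'I_n) :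
  \sum_a ((v a k * v a l)%:~R / (dot (v a) (v a))%:~R : rat) = (k == l)%:R.
Proof.
case: hS => hN hO.
pose M : 'M[rat]_n := \matrix_(a, k) (v a k)%:~R.
pose D : 'M[rat]_n := diag_mx (\row_a ((dot (v a) (v a))%:~R)^-1).
have H1 : M *m (M^T *m D) = 1%:M.
  apply/matrixP => a c; rewrite mul_mx_diag !mxE.
  under eq_bigr => k0 _ do rewrite !mxE.
  have -> : \sum_k0 ((v a k0)%:~R * ((v c k0)%:~R * ((dot (v c) (v c))%:~R)^-1) : rat)
     = (dot (v a) (v c))%:~R * ((dot (v c) (v c))%:~R)^-1.
    move: (((dot (v c) (v c))%:~R)^-1 : rat) => z.
    rewrite /dot rmorph_sum mulr_suml; apply: eq_bigr => k0 _.
    by rewrite rmorphM /= mulrA.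
  case: eqVneq => [->|ne].
    by rewrite divff // intr_eq0 gt_eqF // (lt_le_trans ltr01 (hN c)).
  by rewrite hO // mul0r.
have H2 := mulmx1C H1.
have := congr1 (fun A : 'M[rat]_n => A k l) H2; rewrite /= !mxE => <-.
apply: eq_bigr => a _; rewrite mul_mx_diag !mxE intrM; by rewrite mulrAC.
Qed.

Lemma split2 {n} (w u : 'I_n -> int) (i j : 'I_n) : j != i ->
  dot w u = w i * u i + w j * u j + \sum_(k | (k != i) && (k != j)) w k * u k.
Proof.
move=> ji; rewrite /dot (bigD1 i) //= (bigD1 j) /=; last by rewrite ji.
by rewrite addrA.
Qed.

Lemma dot1 {n} (w u : 'I_n -> int) (i : 'I_n) :
  (forall k, k != i -> w k * u k = 0) -> dot w u = w i * u i.
Proof.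
move=> h; rewrite /dot (bigD1 i) //= big1 ?addr0 //.
Qed.

Lemma pick2 {n} (w : 'I_n -> int) (i : 'I_n) :
  (2 <= #|[set j | w j != 0]|)%N -> exists2 j, j != i & w j != 0.
Proof.
move=> hc.
case: (pickP (fun j => (j != i) && (w j != 0))) => [j /andP[h1 h2]|H].
  by exists j.
have : [set j | w j != 0] \subset [set i].
  apply/subsetP => j; rewrite !inE => hj.
  by have := H j; rewrite hj andbT; case: eqP.
move/subset_leq_card; rewrite cards1 => h.
by have := leq_trans hc h.
Qed.

Lemma supp_struct {n} {w : 'I_n -> int} {i j : 'I_n} :
  j != i -> w i * w i = 1 -> w j != 0 -> dot w w = 2 ->
  w j * w j = 1 /\ forall k, k != i -> k != j -> w k = 0.
Proof.
move=> ji hi hj hN.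
have hr : 0 <= \sum_(k | (k != i) && (k != j)) w k * w k.
  by apply: sumr_ge0 => k _; nia.
have hj1 : 1 <= w j * w j by nia.
move: hN; rewrite (split2 w w _ _ ji) hi => hN.
have h0 : \sum_(k | (k != i) && (k != j)) w k * w k = 0 by lia.
have hw : w j * w j = 1 by lia.
split => // k ki kj.
have hge : forall k, (k != i) && (k != j) -> 0 <= w k * w k by move=> ? _; nia.
have hk : (k != i) && (k != j) by rewrite ki kj.
have := psumr_eq0P hge h0 hk.
by move/eqP; rewrite mulf_eq0 orbb => /eqP.
Qed.

Theorem lemma4p2 (n : nat) (v : 'I_n -> 'I_n -> int)
  (hS : orthogonal_family v)
  (hV : forall a : 'I_n, (2 <= #|Vset v a|)%N)
  (i s t : 'I_n)
  (hi : i \in P2 v)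
  (hE : Eset v i = [set s; t])
  (hs : `|v s i| = 1) (ht : `|v t i| = 1) :
  exists (p : 'S_n) (eps : 'I_n -> int) (a b : int) (j : 'I_n),
    (forall k, sign_ok (eps k)) /\ sign_ok a /\ sign_ok b /\
    j \in P2 (fun al => sperm p eps (v al)) /\
    (forall k, sperm p eps (fun l => a * v s l) k = e i k + e j k) /\
    (forall k, sperm p eps (fun l => b * v t l) k = e i k - e j k).
Proof.
have hst : s != t.
  move: hi; rewrite inE hE cards2; by case: (s != t).
have hsi : v s i * v s i = 1 by nia.
have hti : v t i * v t i = 1 by nia.
have [js jsi hjs] := pick2 (v s) i (hV s).
have [jt jti hjt] := pick2 (v t) i (hV t).
have Ns2 : 2 <= dot (v s) (v s).
  have hr : 0 <= \sum_(k | (k != i) && (k != js)) v s k * v s k.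
    by apply: sumr_ge0 => k _; nia.
  rewrite (split2 _ _ _ _ jsi); nia.
have Nt2 : 2 <= dot (v t) (v t).
  have hr : 0 <= \sum_(k | (k != i) && (k != jt)) v t k * v t k.
    by apply: sumr_ge0 => k _; nia.
  rewrite (split2 _ _ _ _ jti); nia.
have coli := key v hS i i.
rewrite eqxx (bigD1 s) // (bigD1 t) /= ?(negbTE hst) 1?eq_sym ?hst // big1 ?addr0 in coli; last first.
  move=> a /andP[as0 at0].
  have : a \notin Eset v i by rewrite hE !inE negb_or as0 at0.
  by rewrite inE negbK => /eqP ->; rewrite mul0r.
rewrite hsi hti in coli.
set Ns := dot (v s) (v s) in Ns2 coli.
set Nt := dot (v t) (v t) in Nt2 coli.
have NsE : Ns + Nt = Ns * Nt.
  apply/eqP; rewrite -(eqr_int rat) rmorphD rmorphM /=; apply/eqP.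
  have nsz : (Ns%:~R : rat) != 0 by rewrite intr_eq0; apply/eqP; lia.
  have ntz : (Nt%:~R : rat) != 0 by rewrite intr_eq0; apply/eqP; lia.
  move: coli; rewrite !mul1r => coli.
  have := congr1 (fun x => x * Ns%:~R * Nt%:~R) coli.
  rewrite mul1r mulrDl mulrDl mulVf // mul1r mulrAC mulVf // mul1r. by rewrite addrC.
have hNs : Ns = 2 by nia.
have hNt : Nt = 2 by nia.
have [hsj hs0] := supp_struct jsi hsi hjs hNs.
have [htj ht0] := supp_struct jti hti hjt hNt.
have ej : js = jt.
  apply/eqP; apply/negP => ne.
  have : dot (v s) (v t) = v s i * v t i.
    apply: dot1 => k ki.
    case: (eqVneq k js) => [->|kjs]; last by rewrite hs0 // mul0r.
    rewrite ht0 ?mulr0 //; apply/negP => /eqP h; apply: ne; by rewrite h.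
  rewrite hS.2 // => /eqP; rewrite eq_sym mulf_eq0 => /orP[] /eqP h.
    by move: hsi; rewrite h mul0r.
  by move: hti; rewrite h mul0r.
subst jt; set j := js.
have horth : v s i * v t i + v s j * v t j = 0.
  rewrite -(hS.2 s t hst) (split2 _ _ _ _ jsi) big1 ?addr0 //.
  by move=> k /andP[ki kj]; rewrite hs0 // mul0r.
have colj := key v hS j j.
rewrite eqxx (bigD1 s) // (bigD1 t) /= ?(negbTE hst) 1?eq_sym ?hst // in colj.
rewrite hsj htj -/Ns -/Nt hNs hNt in colj.
have h12 : ((1:int)%:~R / (2:int)%:~R + (1:int)%:~R / (2:int)%:~R : rat) = 1 by [].
move: colj; rewrite addrA h12 => /(congr1 (fun x => x - 1)); rewrite (addrC 1 _) addrK subrr => colj.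
have hge : forall a, (a != s) && (a != t) ->
    0 <= ((v a j * v a j)%:~R / (dot (v a) (v a))%:~R : rat).
  move=> a _; apply: divr_ge0; rewrite ler0z; first nia.
  by have := hS.1 a; lia.
have hEj : Eset v j = [set s; t].
  apply/setP => a; rewrite !inE.
  have [->|as0] := eqVneq a s; first by apply/eqP => h; move: hsj; rewrite h mul0r.
  have [->|at0] := eqVneq a t; first by apply/eqP => h; move: htj; rewrite h mul0r.
  have hk : (a != s) && (a != t) by rewrite as0 at0.
  have := psumr_eq0P hge colj hk; move/eqP; rewrite mulf_eq0 invr_eq0 !intr_eq0.
  have -> : (dot (v a) (v a) == 0) = false by apply/eqP; have := hS.1 a; lia.
  by rewrite orbF mulf_eq0 orbb => /eqP ->.
have hjP2 : j \in P2 v by rewrite inE hEj cards2 hst.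
set a0 := v s i. set b0 := v t i. set c := a0 * v s j.
have sgn : forall x : int, x * x = 1 -> sign_ok x.
  move=> x hx; rewrite /sign_ok; have : x ^+ 2 == 1 by rewrite expr2 hx.
  by rewrite sqrf_eq1 => /orP[] /eqP ->; [left|right].
have hc : c * c = 1.
  by rewrite /c -mulrA (mulrCA (v s j)) (mulrA a0) hsi mul1r hsj.
have hc0 : c != 0 by apply/eqP => h; move: hc; rewrite h mul0r.
have ji : j != i := jsi.
exists 1%g, (fun k => if k == j then c else 1), a0, b0, j.
split; first by move=> k; case: (k == j); [apply: sgn | left].
split; first exact: sgn.
split; first exact: sgn.
split.
  rewrite inE; suff -> : Eset (fun al => sperm 1%g (fun k => if k == j then c else 1) (v al)) j = Eset v j.
    by rewrite hEj cards2 hst.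
  by apply/setP => a; rewrite !inE /sperm perm1 eqxx mulf_eq0 (negbTE hc0).
split => k; rewrite /sperm perm1 /e.
  have [->|kj] := eqVneq k j; first by rewrite (negbTE ji) -/c hc.
  have [->|ki] := eqVneq k i; first by rewrite mul1r -/a0 hsi.
  by rewrite hs0 // mulr0 mulr0.
have [->|kj] := eqVneq k j.
  have hxy : v s j * v t j = - (a0 * b0) by apply/eqP; rewrite -addr_eq0 addrC horth.
  have -> : c * (b0 * v t j) = (a0 * b0) * (v s j * v t j) by rewrite /c; ring.
  rewrite hxy mulrN.
  have -> : a0 * b0 * (a0 * b0) = (a0 * a0) * (b0 * b0) by ring.
  by rewrite hsi hti mul1r (negbTE ji).
have [->|ki] := eqVneq k i; first by rewrite mul1r -/b0 hti.
by rewrite ht0 // mulr0 mulr0.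
Qed.
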